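(* Let $H$ be a real Hilbert space, $m\ge1$ an integer, and let $g_m(\alpha,H)$ denote either $\gamma_m(\alpha,H)$ (for the Pure Greedy Algorithm) or $\gamma^o_m(\alpha,H)$ (for the Orthogonal Greedy Algorithm). Suppose that for some $\beta\in(0,1]$, some $C>0$ and some $\varphi(m)>0$ we have $g_m(\beta,H)\le C\varphi(m)^{-\beta/2}$. Then for every $\alpha\in(0,\beta)$, $$ g_m(\alpha,H)\le C^{\alpha/\beta}\varphi(m)^{-\alpha/2}.$$
   Context: A (symmetric) dictionary in $H$ is a set $\mathcal D$ of unit vectors with dense span and $g\in\mathcal D\Rightarrow -g\in\mathcal D$. $A_1(\mathcal D)$ is the closed convex hull of $\mathcal D$ and $\|f\|_{A_1(\mathcal D)}:=\inf\{M:f/M\in A_1(\mathcal D)\}$. For $f\in H$, $g(f)\in\mathcal D$ denotes an element maximizing $\langle f,g\rangle$ over $g\in\mathcal D$ (assumed to exist). PGA: $f_0:=f$, $G_0:=0$, $G_m(f,\mathcal D):=G_{m-1}(f,\mathcal D)+\langle f_{m-1},g(f_{m-1})\rangle g(f_{m-1})$, $f_m:=f-G_m(f,\mathcal D)$. OGA: $f^o_0:=f$, $G^o_m(f,\mathcal D)$ is the orthogonal projection of $f$ onto $\operatorname{span}\{g(f^o_0),\dots,g(f^o_{m-1})\}$, $f^o_m:=f-G^o_m(f,\mathcal D)$. For $\alpha\in(0,1]$, $\gamma_m(\alpha,H):=\sup \frac{\|f-G_m(f,\mathcal D)\|}{\|f\|^{1-\alpha}\|f\|^{\alpha}_{A_1(\mathcal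 D)}}$, the supremum over all dictionaries $\mathcal D$, all $f\neq0$ with $\|f\|_{A_1(\mathcal D)}<\infty$ and all possible realizations of $G_m(f,\mathcal D)$; $\gamma^o_m(\alpha,H)$ is defined the same way with $G^o_m$ in place of $G_m$. *)

(* Defs.v *)
From HB Require Import structures.
From mathcomp Require Import all_boot all_order all_algebra.
From mathcomp Require Import all_classical all_reals all_analysis.
Set Implicit Arguments. Unset Strict Implicit. Unset Printing Implicit Defensive.
Import Order.TTheory GRing.Theory Num.Theory.
Import numFieldNormedType.Exports.
Local Open Scope classical_set_scope.
Local Open Scope ring_scope.

(* A real Hilbert space: a complete normed space over the reals whose norm
   comes from a (symmetric, bilinear) inner product. *)
Record inner_product (R : realType) (H : completeNormedModType R) := InnerProduct {
  ip :> H -> H -> R;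
  ip_sym : forall x y, ip x y = ip y x;
  ip_linl : forall (a : R) x y z, ip (a *: x + y) z = a * ip x z + ip y z;
  ip_norm : forall x, ip x x = `|x| ^+ 2 }.

Section Greedy.
Context {R : realType} {H : completeNormedModType R} (ip : inner_product H).

Definition lspan (D : set H) : set H :=
  [set x | exists n (c : 'I_n -> R) (v : 'I_n -> H),
     (forall i, D (v i)) /\ x = \sum_(i < n) c i *: v i].

Definition dictionary (D : set H) : Prop :=
  (forall g, D g -> `|g| = 1) /\
  closure (lspan D) = setT /\
  (forall g, D g -> D (- g)).

Definition conv_hull (D : set H) : set H :=
  [set x | exists n (w : 'I_n -> R) (v : 'I_n -> H),
     (forall i, 0 <= w i) /\ \sum_(i < n) w i = 1 /\
     (forall i, D (v i)) /\ x = \sum_(i < n) w i *: v i].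

Definition A1 (D : set H) : set H := closure (conv_hull D).

Definition A1norm (D : set H) (f : H) : \bar R :=
  ereal_inf [set M%:E | M in [set M : R | 0 < M /\ A1 D (M^-1 *: f)]].

Definition greedy_choice (D : set H) (r g : H) : Prop :=
  D g /\ forall g', D g' -> ip r g' <= ip r g.

Fixpoint pga_G (f : H) (gs : nat -> H) (k : nat) : H :=
  match k with
  | 0 => 0
  | k'.+1 => pga_G f gs k' + ip (f - pga_G f gs k') (gs k') *: gs k'
  end.

Definition pga_realization (D : set H) (f : H) (m : nat) (gs : nat -> H) : Prop :=
  forall k, (k < m)%N -> greedy_choice D (f - pga_G f gs k) (gs k).

Definition fspan (gs : nat -> H) (k : nat) : set H :=
  [set x | exists c : 'I_k -> R, x = \sum_(i < k) c i *: gs i].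

Definition is_orth_proj (S : set H) (f p : H) : Prop :=
  S p /\ forall s, S s -> ip (f - p) s = 0.

Definition oga_realization (D : set H) (f : H) (m : nat) (gs Gs : nat -> H) : Prop :=
  (forall k, (k <= m)%N -> is_orth_proj (fspan gs k) f (Gs k)) /\
  (forall k, (k < m)%N -> greedy_choice D (f - Gs k) (gs k)).

Definition ratio (D : set H) (alpha : R) (f Gm : H) : R :=
  `|f - Gm| / (`|f| `^ (1 - alpha) * (fine (A1norm D f)) `^ alpha).

Definition admissible (D : set H) (f : H) : Prop :=
  dictionary D /\ f != 0 /\ (A1norm D f < +oo)%E.

Definition gamma_pga (m : nat) (alpha : R) : \bar R :=
  ereal_sup [set r | exists (D : set H) (f : H) (gs : nat -> H),
     admissible D f /\ pga_realization D f m gs /\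
     r = (ratio D alpha f (pga_G f gs m))%:E].

Definition gamma_oga (m : nat) (alpha : R) : \bar R :=
  ereal_sup [set r | exists (D : set H) (f : H) (gs Gs : nat -> H),
     admissible D f /\ oga_realization D f m gs Gs /\
     r = (ratio D alpha f (Gs m))%:E].

End Greedy.

(* Main.v *)
From Pilot Require Import Defs.
From HB Require Import structures.
From mathcomp Require Import all_boot all_order all_algebra.
From mathcomp Require Import all_classical all_reals all_analysis.
From mathcomp Require Import ring lra.
Import Order.TTheory GRing.Theory Num.Theory.
Import numFieldNormedType.Exports.
Local Open Scope ring_scope.

Lemma key (R : realType) (x n A a b K : R) : 0 <= x -> x <= n -> 0 < n -> 0 <= A ->
  0 < a -> a < b -> b <= 1 ->
  x / (n `^ (1 - b) * A `^ b) <= K -> x / (n `^ (1 - a) * A `^ a) <= K `^ (a / b).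
Proof.
move=> x0 xn n0 A0 a0 ab b1 hK.
have b0 : 0 < b by apply: lt_trans ab.
have [->|Ap] := eqVneq A 0.
  by rewrite powR0 ?gt_eqF // mulr0 invr0 mulr0 powR_ge0.
have A0' : 0 < A by rewrite lt_def Ap.
set s := a / b.
have s0 : 0 <= s by rewrite divr_ge0 // ltW.
have s1 : 0 <= 1 - s by rewrite subr_ge0 ler_pdivrMr // mul1r ltW.
set Db := n `^ (1 - b) * A `^ b.
have Db0 : 0 < Db by rewrite mulr_gt0 // powR_gt0.
have K0 : 0 <= K by apply: le_trans hK; rewrite divr_ge0 // ltW.
have xK : x <= K * Db by rewrite -ler_pdivrMr.
have Da : n `^ (1 - a) * A `^ a = n `^ (1 - s) * Db `^ s.
  rewrite /Db powRM ?powR_ge0 // -!powRrM mulrA -powRD; last by rewrite (gt_eqF n0) implybT.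
  congr (n `^ _ * A `^ _); rewrite /s; field; by rewrite gt_eqF.
have Da0 : 0 < n `^ (1 - a) * A `^ a by rewrite mulr_gt0 // powR_gt0.
rewrite ler_pdivrMr // Da.
have -> : x = x `^ (1 - s) * x `^ s.
  have [->|xp] := eqVneq x 0.
    have [->|sp] := eqVneq s 0; first by rewrite subr0 powRr0 mulr1 powRr1.
    by rewrite (powR0 sp) mulr0.
  by rewrite -powRD ?xp ?implybT // subrK powRr1.
rewrite mulrCA.
apply: ler_pM; rewrite ?powR_ge0 //.
  by apply: ge0_ler_powR => //; rewrite nnegrE // ltW.
rewrite -powRM //; last exact: ltW.
apply: ge0_ler_powR => //; rewrite nnegrE; exact: (mulr_ge0 K0 (ltW Db0)).
Qed.

Section IP.
Context {R : realType} {H : completeNormedModType R} (ip : inner_product H).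

Lemma ip0l z : ip 0 z = 0.
Proof. have := ip_linl ip 1 0 0 z; rewrite scaler0 addr0 mul1r => h; lra. Qed.

Lemma ipDl x y z : ip (x + y) z = ip x z + ip y z.
Proof. by have := ip_linl ip 1 x y z; rewrite scale1r mul1r. Qed.

Lemma ipZl a x z : ip (a *: x) z = a * ip x z.
Proof. by have := ip_linl ip a x 0 z; rewrite addr0 ip0l addr0. Qed.

Lemma ipBl x y z : ip (x - y) z = ip x z - ip y z.
Proof. by rewrite ipDl -scaleN1r ipZl mulN1r. Qed.

Lemma ipDr x y z : ip z (x + y) = ip z x + ip z y.
Proof. by rewrite ip_sym ipDl !(ip_sym ip z). Qed.

Lemma ipZr a x z : ip z (a *: x) = a * ip z x.
Proof. by rewrite ip_sym ipZl (ip_sym ip z). Qed.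

Lemma pyth (r p : H) : ip (r - p) p = 0 -> `|r - p| <= `|r|.
Proof.
move=> h.
have e : `|r| ^+ 2 = `|r - p| ^+ 2 + `|p| ^+ 2.
  rewrite -!(ip_norm ip).
  move: h; set q := r - p => h.
  have er : r = q + p by rewrite /q subrK.
  clearbody q; rewrite er ipDl !ipDr (ip_sym ip p q) h; lra.
have h1 := normr_ge0 (r - p); have h2 := normr_ge0 r; have h3 := normr_ge0 p.
nra.
Qed.

Lemma pga_dec (D : set H) (f : H) (m : nat) (gs : nat -> H) :
  dictionary D -> pga_realization ip D f m gs ->
  forall k, (k <= m)%N -> `|f - pga_G ip f gs k| <= `|f|.
Proof.
move=> [Dn _] hr; elim=> [|k IH] km /=; first by rewrite subr0.
apply: le_trans (IH (ltnW km)).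
have [Dg _] := hr k km.
have g1 : ip (gs k) (gs k) = 1 by rewrite (ip_norm ip) Dn // expr1n.
set r := f - pga_G ip f gs k.
have -> : f - (pga_G ip f gs k + ip r (gs k) *: gs k) = r - ip r (gs k) *: gs k.
  by rewrite /r opprD addrA.
clearbody r; apply: pyth.
rewrite ipZr ipBl ipZl g1; ring.
Qed.

Lemma oga_dec (D : set H) (f : H) (m : nat) (gs Gs : nat -> H) :
  oga_realization ip D f m gs Gs -> `|f - Gs m| <= `|f|.
Proof.
move=> [hp _]; have [hS ho] := hp m (leqnn m).
exact: pyth (ho _ hS).
Qed.

Lemma A1norm_ge0 (D : set H) (f : H) : 0 <= fine (A1norm D f).
Proof.
apply: fine_ge0; apply: le_ereal_inf_tmp => _ [M [M0 _] <-].
by rewrite lee_fin ltW.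
Qed.

End IP.
Theorem lemma2p2 (R : realType) (H : completeNormedModType R)
  (ip : inner_product H) (m : nat) (beta C : R) (phi : nat -> R) :
  (1 <= m)%N -> 0 < beta <= 1 -> 0 < C -> 0 < phi m ->
  ((gamma_pga ip m beta <= (C * phi m `^ (- (beta / 2)))%:E)%E ->
     forall alpha : R, 0 < alpha < beta ->
     (gamma_pga ip m alpha <= (C `^ (alpha / beta) * phi m `^ (- (alpha / 2)))%:E)%E)
  /\
  ((gamma_oga ip m beta <= (C * phi m `^ (- (beta / 2)))%:E)%E ->
     forall alpha : R, 0 < alpha < beta ->
     (gamma_oga ip m alpha <= (C `^ (alpha / beta) * phi m `^ (- (alpha / 2)))%:E)%E).
Proof.
move=> m1 /andP[b0 b1] C0 phi0.
set K := C * phi m `^ (- (beta / 2)).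
have KE alpha : C `^ (alpha / beta) * phi m `^ (- (alpha / 2)) = K `^ (alpha / beta).
  rewrite /K powRM ?powR_ge0 ?ltW // -powRrM; congr (_ * phi m `^ _).
  by field; rewrite gt_eqF.
split.
- move=> hb alpha /andP[a0 ab].
  apply/ereal_supP => _ [D [f [gs [hA [hr ->]]]]].
  have [hD [hf _]] := hA.
  rewrite lee_fin KE.
  have hB : ((Pilot.Defs.ratio D beta f (pga_G ip f gs m))%:E <= K%:E)%E.
    apply: le_trans hb; apply: ereal_sup_ubound; exists D, f, gs; split => //.
  rewrite lee_fin in hB.
  apply: key hB => //; rewrite ?normr_ge0 ?normr_gt0 ?A1norm_ge0 //.
  exact: pga_dec hr _ (leqnn m).
- move=> hb alpha /andP[a0 ab].
  apply/ereal_supP => _ [D [f [gs [Gs [hA [hr ->]]]]]].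
  have [hD [hf _]] := hA.
  rewrite lee_fin KE.
  have hB : ((Pilot.Defs.ratio D beta f (Gs m))%:E <= K%:E)%E.
    apply: le_trans hb; apply: ereal_sup_ubound; exists D, f, gs, Gs; split => //.
  rewrite lee_fin in hB.
  apply: key hB => //; rewrite ?normr_ge0 ?normr_gt0 ?A1norm_ge0 //.
  exact: oga_dec hr.
Qed.
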